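(* Let $f$ be a continuous map on a compact metric space $\mathbf{M}$, and let $(U_n)$ be a nested sequence of subsets ($U_{n+1}\subset U_n$, not necessarily open) such that $\bigcap_nU_n=\bigcap_n\overline{U_n}=:\Lambda$. Then $\pi(U_n)\to\infty$ if and only if $\Lambda$ contains no periodic point and $\Lambda$ is contained in a fundamental domain of $f$, i.e., $\Lambda$ intersects every orbit at most once.
   Context: For $U\subset\mathbf{M}$, the period of $U$ is $\pi(U)=\min\{k>0:f^{-k}U\cap U\neq\emptyset\}$ (with $\pi(U)=\infty$ if no such $k$ exists). The orbit of $x$ is $\{f^k(x):k\ge0\}$. *)

(* Defs.v *)
From HB Require Import structures.
From mathcomp Require Import all_boot all_order all_algebra.
From mathcomp Require Import all_classical all_reals all_analysis.
Set Implicit Arguments. Unset Strict Implicit. Unset Printing Implicit Defensive.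
Import Order.TTheory GRing.Theory Num.Theory.
Local Open Scope classical_set_scope.
Local Open Scope ring_scope.

(* period of U under f: pi(U) = min {k > 0 : f^{-k} U `&` U <> set0},
   valued in the extended reals so that min of the empty set is +oo. *)
Definition period (R : realType) (T : Type) (f : T -> T) (U : set T) : \bar R :=
  ereal_inf [set (k%:R)%:E | k in
     [set k : nat | (0 < k)%N /\ (iter k f @^-1` U) `&` U !=set0]].

Definition orbit (T : Type) (f : T -> T) (x : T) : set T :=
  [set iter k f x | k in [set: nat]].

Definition periodic_point (T : Type) (f : T -> T) (x : T) : Prop :=
  exists k : nat, (0 < k)%N /\ iter k f x = x.

Definition in_fundamental_domain (T : Type) (f : T -> T) (L : set T) : Prop :=
  forall x y z, L y -> orbit f x y -> L z -> orbit f x z -> y = z.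

(* Main.v *)
Require Import Defs.
From HB Require Import structures.
From mathcomp Require Import all_boot all_order all_algebra.
From mathcomp Require Import all_classical all_reals all_analysis.
Import Order.TTheory GRing.Theory Num.Theory.
Local Open Scope classical_set_scope.
Local Open Scope ring_scope.

Lemma anti_sub (T : Type) (U : nat -> set T) :
  (forall n, U n.+1 `<=` U n) -> forall n d, U (n + d)%N `<=` U n.
Proof.
move=> hU n; elim=> [|d IH]; first by rewrite addn0.
by rewrite addnS; apply: subset_trans (hU _) IH.
Qed.

Lemma anti_le (T : Type) (U : nat -> set T) :
  (forall n, U n.+1 `<=` U n) -> forall n m, (n <= m)%N -> U m `<=` U n.
Proof. by move=> hU n m /subnKC <-; apply: anti_sub. Qed.

Lemma pigeon (T : Type) (g : T -> T) (N : nat) : forall (U : nat -> set T),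
  (forall n, U n.+1 `<=` U n) ->
  (forall n, exists k, (0 < k < N)%N /\ exists x, U n x /\ U n (iter k g x)) ->
  exists k, (0 < k)%N /\ forall n, exists x, U n x /\ U n (iter k g x).
Proof.
elim: N => [|N IH] U hU H.
  by have [k [/andP[_ //]]] := H 0%N.
have [PN|nPN] := pselect ((0 < N)%N /\ forall n, exists x, U n x /\ U n (iter N g x)).
  by exists N.
have [n0 Hn0] : exists n0, forall x, U n0 x -> ~ U n0 (iter N g x).
  apply: contra_notP nPN => hc; split.
    case: N IH H hc => [|N] // IH H hc; exfalso.
    by have [k [/andP[k0 k1] _]] := H 0%N; move: k0 k1; case: k.
  move=> n; apply: contra_notP hc => hn.
  exists n => x ux ug; apply: hn; by exists x.
have H' : forall n, exists k, (0 < k < N)%N /\ exists x, U (n + n0)%N x /\ U (n + n0)%N (iter k g x).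
  move=> n; have [k [/andP[k0 kN] [x [ux ug]]]] := H (n + n0)%N.
  exists k; split; last by exists x.
  rewrite k0 /= ltn_neqAle -ltnS kN andbT.
  apply/eqP => kE; subst k.
  have := @anti_sub _ U hU n0 n; rewrite addnC => s.
  exact: (Hn0 x (s _ ux) (s _ ug)).
have [k [k0 Hk]] := IH (fun n => U (n + n0)%N) (fun n => hU _) H'.
exists k; split => // n; have [x [ux ug]] := Hk n.
by exists x; split; apply: (@anti_sub _ U hU n n0).
Qed.

Lemma iter_cont (T : topologicalType) (f : T -> T) k :
  continuous f -> continuous (iter k f).
Proof.
move=> hf; elim: k => [|k IH] x /=; first exact: cvg_id.
exact: (continuous_comp (IH x) (hf _)).
Qed.

Lemma period_le (R : realType) (T : Type) (f : T -> T) (U : nat -> set T) k y :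
  (0 < k)%N -> (\bigcap_n U n) y -> (\bigcap_n U n) (iter k f y) ->
  forall n, (period R f (U n) <= (k%:R)%:E)%E.
Proof.
move=> k0 Ly Lky n; apply: ereal_inf_lbound; exists k => //; split => //.
by exists y; split; [apply: Lky|apply: Ly].
Qed.

Arguments period_le {R T f U k y}.

Lemma period_contra (R : realType) (T : Type) (f : T -> T) (U : nat -> set T) k y :
  ((fun n => period R f (U n)) @ \oo --> +oo%E) ->
  (0 < k)%N -> (\bigcap_n U n) y -> ~ (\bigcap_n U n) (iter k f y).
Proof.
move=> hcv k0 Ly Lky.
have [N _ HN] := cvgey_gt hcv (k%:R).
have := HN N (leqnn N); rewrite /= ltNge.
by rewrite (period_le k0 Ly Lky).
Qed.

Arguments period_contra {R T f U k y}.
Arguments iter_cont {T f} k.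
Arguments pigeon {T g N U}.
Arguments anti_le {T U} hU {n m}.

Theorem proposition6p2 (R : realType) (M : metricType R) (f : M -> M)
  (U : nat -> set M) :
  compact [set: M] ->
  continuous f ->
  (forall n, U n.+1 `<=` U n) ->
  \bigcap_n U n = \bigcap_n closure (U n) ->
  ((fun n => period R f (U n)) @ \oo --> +oo%E) <->
  ((forall x, (\bigcap_n U n) x -> ~ periodic_point f x) /\
   in_fundamental_domain f (\bigcap_n U n)).
Proof.
move=> hc hf hU hcl; split.
  move=> hcv; split.
    move=> x Lx [k [k0 kx]].
    by apply: (period_contra hcv k0 Lx); rewrite kx.
  move=> x y z Ly [a _ ya] Lz [b _ zb]; subst y z.
  case: (ltngtP a b) => [ab|ba|-> //]; exfalso.
    apply: (period_contra hcv (k := (b - a)%N) _ Ly); first by rewrite subn_gt0.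
    by rewrite -iterD subnK // ltnW.
  apply: (period_contra hcv (k := (a - b)%N) _ Lz); first by rewrite subn_gt0.
  by rewrite -iterD subnK // ltnW.
move=> [noper fd]; apply/cvgeyPgt => A.
case: (pselect (exists n0, (A%:E < period R f (U n0))%E)) => [[n0 Hn0]|nex].
  exists n0 => // n /= n0n; apply: (lt_le_trans Hn0); apply: le_ereal_inf.
  move=> _ [k [k0 [x [ux ug]]] <-]; exists k => //; split => //.
  by exists x; split; apply: (anti_le hU n0n).
exfalso.
have H : forall n, (period R f (U n) <= A%:E)%E.
  by move=> n; rewrite leNgt; apply/negP => h; apply: nex; exists n.
set N := (Num.Def.trunc (A + 1)).+1.
have H2 : forall n, exists k, (0 < k < N)%N /\ exists x, U n x /\ U n (iter k f x).
  move=> n; have : (period R f (U n) < (A + 1)%:E)%E.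
    by apply: (le_lt_trans (H n)); rewrite lte_fin ltrDl.
  move=> /ereal_inf_lt [_ [k [k0 [x [ux ug]]] <-]].
  rewrite lte_fin => kA; exists k; split; last by exists x.
  rewrite k0 /= -(ltr_nat R); apply: (lt_trans kA); exact: truncnS_gt.
have [k [k0 Hk]] := pigeon hU H2.
have [xs hxs] := choice Hk.
have PF : ProperFilter (xs @ \oo) by typeclasses eauto.
have [p [_ cp]] := hc (xs @ \oo) PF filterT.
have Lp : (\bigcap_n U n) p.
  rewrite hcl => n _ B nB.
  apply: (cp (U n) B _ nB); exists n => // m nm.
  exact: (anti_le hU nm _ (hxs m).1).
have Lq : (\bigcap_n U n) (iter k f p).
  rewrite hcl => n _ B nB.
  have nB' := iter_cont k hf p _ nB.
  have Fn : (xs @ \oo) (iter k f @^-1` U n).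
    exists n => // m nm.
    exact: (anti_le hU nm _ (hxs m).2).
  have [y [uy By]] := cp (iter k f @^-1` U n) _ Fn nB'.
  by exists (iter k f y).
have e := fd p p (iter k f p) Lp (ex_intro2 _ _ 0%N I erefl) Lq (ex_intro2 _ _ k I erefl).
by apply: (noper p Lp); exists k; split.
Qed.
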